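(* Let $d,n\ge 1$, let $\mathbf{x}_1,\ldots,\mathbf{x}_n\in\mathbb{R}^d$ (column vectors), $y_1,\ldots,y_n\in\mathbb{R}$, and $\eta>0$. Consider the linear self-attention (LSA) layer acting on a sequence $(\mathbf{z}_1,\ldots,\mathbf{z}_n)$ of vectors in $\mathbb{R}^{d+1}$ by $$\mathbf{z}_j\leftarrow \mathbf{z}_j+\mathbf{P}\mathbf{V}\sum_{i=1}^n \mathbf{z}_i\left(\mathbf{z}_i^\top\mathbf{K}^\top\mathbf{Q}\mathbf{z}_j\right),\qquad j=1,\ldots,n,$$ with parameters $$\mathbf{K}=\mathbf{Q}=\begin{pmatrix}\mathbf{I}_{d\times d}&\mathbf{0}\\ 0&0\end{pmatrix},\quad \mathbf{V}=\begin{pmatrix}\mathbf{0}_{d\times d}&\mathbf{0}\\ \mathbf{w}^{(0)}&-1\end{pmatrix},\quad \mathbf{P}=\frac{\eta}{n}\mathbf{I},$$ where $\mathbf{w}^{(0)}=0$ (a $1\times d$ row vector). Apply $l$ such layers in succession (all with these same parameters) to the input $\mathbf{z}_j^{(0)}=(\mathbf{x}_j^\top,y_j)^\top$, $j=1,\ldots,n$, and denote by $\mathbf{z}_j^{(l)}$ the output of the $l$-th layer. Define row vectors $\mathbf{w}^{(l)}\in\mathbb{R}^{1\times d}$ by $\mathbf{w}^{(0)}=0$ and $$\mathbf{w}^{(l)}=\mathbf{w}^{(l-1)}+\frac{\eta}{n}\sum_{i=1}^n\left(y_i-\mathbf{w}^{(l-1)}\mathbf{x}_i\right)\mathbf{x}_i^\top,\qquad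 l\ge 1.$$ Then for every $l\ge 0$ and every $j$, $\mathbf{z}_j^{(l)}=(\mathbf{x}_j^\top,\delta_j^{(l)})^\top$ where $\delta_j^{(l)}=y_j-\mathbf{w}^{(l)}\mathbf{x}_j$.
   Context: Weight vectors $\mathbf{w}$ are $1\times d$ row vectors and inputs $\mathbf{x}_i$ are $d\times 1$ column vectors, so $\mathbf{w}\mathbf{x}_i$ is a scalar. The recursion for $\mathbf{w}^{(l)}$ is gradient descent with step size $\eta$ on the least-squares loss $L(\mathbf{w})=\frac{1}{2n}\sum_{i=1}^n(\mathbf{w}\mathbf{x}_i-y_i)^2$. *)

(* Defs.v *)
From HB Require Import structures.
From mathcomp Require Import all_boot all_order all_algebra.
From mathcomp Require Import reals.
Set Implicit Arguments. Unset Strict Implicit. Unset Printing Implicit Defensive.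
Import Order.TTheory GRing.Theory Num.Theory.
Local Open Scope ring_scope.

Section LSA.
Variables (R : realType) (d n : nat).

Definition lsa_K : 'M[R]_(d + 1) := block_mx 1%:M 0 0 0.
Definition lsa_Q : 'M[R]_(d + 1) := block_mx 1%:M 0 0 0.
Definition lsa_V (w0 : 'rV[R]_d) : 'M[R]_(d + 1) := block_mx 0 0 w0 (- 1%:M).
Definition lsa_P (eta : R) : 'M[R]_(d + 1) := (eta / n%:R)%:M.

Definition lsa_layer (K Q V P : 'M[R]_(d + 1)) (Z : 'I_n -> 'cV[R]_(d + 1))
  : 'I_n -> 'cV[R]_(d + 1) :=
  fun j => Z j + P *m V *m (\sum_(i < n) (Z i *m ((Z i)^T *m K^T *m Q *m Z j))).

Fixpoint lsa_iter (eta : R) (l : nat) (Z : 'I_n -> 'cV[R]_(d + 1))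
  : 'I_n -> 'cV[R]_(d + 1) :=
  match l with
  | 0 => Z
  | l'.+1 => lsa_layer lsa_K lsa_Q (lsa_V 0) (lsa_P eta) (lsa_iter eta l' Z)
  end.

Fixpoint gd_w (eta : R) (x : 'I_n -> 'cV[R]_d) (y : 'I_n -> R) (l : nat)
  : 'rV[R]_d :=
  match l with
  | 0 => 0
  | l'.+1 => let w := gd_w eta x y l' in
      w + (eta / n%:R) *: \sum_(i < n) ((y i - (w *m x i) 0 0) *: (x i)^T)
  end.

Definition lsa_input (x : 'I_n -> 'cV[R]_d) (y : 'I_n -> R)
  : 'I_n -> 'cV[R]_(d + 1) := fun j => col_mx (x j) (y j)%:M.

End LSA.

(* Main.v *)
Require Import Defs.
From HB Require Import structures.
From mathcomp Require Import all_boot all_order all_algebra.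
From mathcomp Require Import reals.
Import Order.TTheory GRing.Theory Num.Theory.
Local Open Scope ring_scope.

Lemma sc_mul (R : realType) (a : R) (M : 'M[R]_1) i j : (a%:M *m M) i j = a * M 0 0.
Proof. by rewrite mul_scalar_mx mxE !ord1. Qed.

Theorem proposition1 (R : realType) (d n : nat) (hd : (1 <= d)%N) (hn : (1 <= n)%N)
  (x : 'I_n -> 'cV[R]_d) (y : 'I_n -> R) (eta : R) (heta : 0 < eta) :
  forall (l : nat) (j : 'I_n),
    lsa_iter eta l (lsa_input x y) j
    = col_mx (x j) ((y j - (gd_w eta x y l *m x j) 0 0)%:M).
Proof.
elim=> [|l IH] j.
  by rewrite /= /lsa_input mul0mx mxE subr0.
rewrite /= /lsa_layer.
have E : forall i, (lsa_iter eta l (lsa_input x y) i)^T *m (lsa_K R d)^T *m lsa_Q R d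
   *m lsa_iter eta l (lsa_input x y) j = (x i)^T *m x j.
  move=> i; rewrite !IH /lsa_K /lsa_Q tr_block_mx !trmx0 trmx1 tr_col_mx.
  rewrite mul_row_block !mulmx0 mulmx1 !addr0 mul_row_block !mulmx0 mulmx1 !addr0.
  by rewrite mul_row_col mul0mx addr0.
rewrite (_ : \sum_(i < n) _ = col_mx (\sum_(i < n) x i *m ((x i)^T *m x j))
      (\sum_(i < n) (y i - (gd_w eta x y l *m x i) 0 0)%:M *m ((x i)^T *m x j))); last first.
  apply/matrixP=> a b; rewrite summxE mxE; case: splitP => k Ha; rewrite summxE.
    have -> : a = lshift 1 k by apply: val_inj.
    by apply: eq_bigr => i _; rewrite E IH mul_col_mx col_mxEu.
  have -> : a = rshift d k by apply: val_inj.
  by apply: eq_bigr => i _; rewrite E IH mul_col_mx col_mxEd.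
rewrite IH /lsa_V /lsa_P -mulmxA.
rewrite mul_block_col !mul0mx !addr0 add0r mul_scalar_mx scale_col_mx scaler0 add_col_mx addr0.
congr col_mx.
apply/rowP=> k; rewrite ord1 !mxE /=.
rewrite big_ord1 !mxE /= mulN1r summxE !mulr1n.
rewrite (eq_bigr (fun i => (y i - (gd_w eta x y l *m x i) 0 0) * ((x i)^T *m x j) 0 0)); last first.
  by move=> i _; apply: sc_mul.
set c := eta / n%:R.
set w := gd_w eta x y l.
rewrite [in RHS](eq_bigr (fun k0 => w 0 k0 * x j k0 0 + c * \sum_(i < n) (y i - (w *m x i) 0 0) * (x i k0 0 * x j k0 0))); last first.
  move=> k0 _; rewrite !mxE summxE mulrDl; congr (_ + _).
  rewrite -mulrA big_distrl /=; congr (_ * _); apply: eq_bigr => i _.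
  by rewrite !mxE mulrA.
rewrite big_split /= opprD addrA mulrN; congr (_ - _).
rewrite -mulr_sumr; congr (_ * _).
rewrite exchange_big /=; apply: eq_bigr => i _.
rewrite mxE -mulr_sumr; congr (_ * _); rewrite mxE; apply: eq_bigr => k0 _; by rewrite mxE.
Qed.
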